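(* Let $f_{1,\infty}=\{f_n\}_{n=1}^\infty$ be a periodic sequence of continuous maps $f_n:[0,1]\to[0,1]$ (i.e. there is $k\in\mathbb{N}$ with $f_{j+kl}=f_j$ for all $l\in\mathbb{N}$, $1\le j\le k$). Then the following are equivalent for the non-autonomous system $([0,1],f_{1,\infty})$: (1) it is strongly multi-sensitive; (2) it is $\mathcal{N}$-sensitive; (3) it is multi-sensitive; (4) it is sensitive.
   Context: Use the usual metric on $[0,1]$. Write $f_i^n=f_{n+i-1}\circ\cdots\circ f_i$, $f_i^0=\mathrm{id}$, and $f_{1,\infty}^{[k]}=\{f^k_{k(n-1)+1}\}_{n=1}^\infty$ (its $n$-fold composition from index $1$ is $f_1^{kn}$). For $V\subseteq X$, $\delta>0$: $N_{f_{1,\infty}}(V,\delta)=\{n\in\mathbb{N}:\exists u,v\in V,\ d(f_1^n(u),f_1^n(v))>\delta\}$. The system is sensitive if there is $\delta>0$ with $N_{f_{1,\infty}}(V,\delta)\ne\varnothing$ for every nonempty open $V$; multi-sensitive if there is $\delta>0$ with $\bigcap_{i=1}^m N_{f_{1,\infty}}(V_i,\delta)\neq\varnothing$ for every finite collection of nonempty open $V_1,\dots,V_m$. For $\mathbf{v}=(v_1,\dots,v_r)\in\mathbb{N}^r$, it is multi-sensitive with respect to $\mathbf{v}$ if there is $\delta>0$ such that $\bigcap_{i=1}^r N_{f_{1,\infty}^{[v_i]}}(U_i,\delta)\ne\varnothing$ for all nonempty open $U_1,\dots,U_r$; $\mathcal{N}$-sensitive if multi-sensitive with respect to $(1,\dots,n)$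 for every $n$; strongly multi-sensitive if multi-sensitive with respect to every vector in $\mathbb{N}^r$ for every $r$. *)

(* Defs.v *)
(* the space [0,1] is represented as the subset I01 of R,
   with the usual metric |x - y| and the relative (subspace) topology. *)
From Stdlib Require Import Reals Lra Lia.
Open Scope R_scope.

Definition I01 (x : R) : Prop := 0 <= x <= 1.

Definition maps_I01 (f : R -> R) : Prop := forall x, I01 x -> I01 (f x).

Definition cont_I01 (f : R -> R) : Prop :=
  forall x, I01 x -> forall eps, 0 < eps ->
    exists del, 0 < del /\
      forall y, I01 y -> Rabs (y - x) < del -> Rabs (f y - f x) < eps.

Definition open_I01 (V : R -> Prop) : Prop :=
  (forall x, V x -> I01 x) /\
  (forall x, V x -> exists eps, 0 < eps /\
      forall y, I01 y -> Rabs (y - x) < eps -> V y).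

Definition nonempty_open_I01 (V : R -> Prop) : Prop :=
  open_I01 V /\ exists x, V x.

(* Sequences f_1, f_2, ... are 1-indexed: f : nat -> (R -> R), f 0 unused.
   comp f i n = f_i^n = f_{n+i-1} o ... o f_i, comp f i 0 = id. *)
Fixpoint comp (f : nat -> R -> R) (i n : nat) (x : R) : R :=
  match n with
  | O => x
  | S m => f (i + m)%nat (comp f i m x)
  end.

Definition power_seq (f : nat -> R -> R) (k : nat) : nat -> R -> R :=
  fun n => comp f (k * (n - 1) + 1)%nat k.

Definition Nset (f : nat -> R -> R) (V : R -> Prop) (delta : R) (n : nat) : Prop :=
  (1 <= n)%nat /\
  exists u v, V u /\ V v /\ Rabs (comp f 1 n u - comp f 1 n v) > delta.

Definition sensitive (f : nat -> R -> R) : Prop :=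
  exists delta, 0 < delta /\
    forall V, nonempty_open_I01 V -> exists n, Nset f V delta n.

Definition multi_sensitive (f : nat -> R -> R) : Prop :=
  exists delta, 0 < delta /\
    forall (m : nat) (V : nat -> R -> Prop), (1 <= m)%nat ->
      (forall i, (1 <= i <= m)%nat -> nonempty_open_I01 (V i)) ->
      exists n, forall i, (1 <= i <= m)%nat -> Nset f (V i) delta n.

Definition multi_sensitive_wrt (f : nat -> R -> R) (r : nat) (v : nat -> nat) : Prop :=
  exists delta, 0 < delta /\
    forall U : nat -> R -> Prop,
      (forall i, (1 <= i <= r)%nat -> nonempty_open_I01 (U i)) ->
      exists n, forall i, (1 <= i <= r)%nat ->
        Nset (power_seq f (v i)) (U i) delta n.

Definition N_sensitive (f : nat -> R -> R) : Prop :=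
  forall n : nat, (1 <= n)%nat -> multi_sensitive_wrt f n (fun i => i).

Definition strongly_multi_sensitive (f : nat -> R -> R) : Prop :=
  forall (r : nat) (v : nat -> nat), (1 <= r)%nat ->
    (forall i, (1 <= i <= r)%nat -> (1 <= v i)%nat) ->
    multi_sensitive_wrt f r v.

Definition periodic (f : nat -> R -> R) : Prop :=
  exists k : nat, (1 <= k)%nat /\
    forall l j, (1 <= l)%nat -> (1 <= j <= k)%nat ->
      forall x, I01 x -> f (j + k * l)%nat x = f j x.

(* Main.v *)
Require Import Defs.
From Stdlib Require Import Reals Lra Lia ZArith Classical ClassicalEpsilon.
Open Scope R_scope.
Local Notation comp := Defs.comp.


Lemma arch_inv (d : R) : 0 < d -> exists N : nat, / INR (S N) < d.
Proof.
  intros Hd.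
  destruct (archimed (/ d)) as [H1 _].
  exists (Z.to_nat (up (/ d))).
  assert (Hz : IZR (up (/d)) <= INR (Z.to_nat (up (/d)))).
  { destruct (ZArith_dec.Z_le_gt_dec 0 (up (/d))) as [Hp|Hn].
    - rewrite INR_IZR_INZ, Z2Nat.id; [lra|lia].
    - assert (IZR (up (/d)) < 0) by (apply IZR_lt; lia). pose proof (pos_INR (Z.to_nat (up (/ d)))); lra. }
  rewrite S_INR.
  assert (0 < / d) by (apply Rinv_0_lt_compat; lra).
  set (M := INR (Z.to_nat (up (/ d)))) in *. set (u := IZR (up (/ d))) in *.
  rewrite <- (Rinv_inv d).
  assert (0 <= M) by apply pos_INR. apply Rinv_lt_contravar; [apply Rmult_lt_0_compat|]; lra.
Qed.

Lemma inv_S_pos (n : nat) : 0 < / INR (S n).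
Proof. apply Rinv_0_lt_compat, lt_0_INR; lia. Qed.

Lemma inv_S_mono (n m : nat) : (n <= m)%nat -> / INR (S m) <= / INR (S n).
Proof.
  intros H. apply Rinv_le_contravar. apply lt_0_INR; lia. apply le_INR; lia.
Qed.

Lemma compact_unif (lo hi : R) (P : nat -> R -> Prop) :
  (forall n m b, (n <= m)%nat -> P n b -> P m b) ->
  (forall b, lo <= b <= hi -> exists N, forall b', lo <= b' <= hi ->
      Rabs (b' - b) < / INR (S N) -> P N b') ->
  exists N, forall b, lo <= b <= hi -> P N b.
Proof.
  intros Hmono Hloc.
  apply NNPP; intros Hno.
  assert (Hex : forall N, exists b, lo <= b <= hi /\ ~ P N b).
  { intros N. apply NNPP; intros H2. apply Hno. exists N. intros b Hb.
    apply NNPP; intros H3. apply H2. exists b; auto. }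
  set (bs := fun N => proj1_sig (constructive_indefinite_description _ (Hex N))).
  assert (Hbs : forall N, lo <= bs N <= hi /\ ~ P N (bs N)).
  { intros N. unfold bs. destruct (constructive_indefinite_description _ (Hex N)); auto. }
  destruct (Bolzano_Weierstrass bs (fun c => lo <= c <= hi) (compact_P3 lo hi)
              (fun n => proj1 (Hbs n))) as [l Hl].
  assert (Hlr : lo <= l <= hi).
  { split; apply Rnot_lt_le; intros Hc.
    - assert (Hp : 0 < lo - l) by lra.
      destruct (Hl (fun y => Rabs (y - l) < lo - l) 0%nat) as [p [_ Hp2]].
      { exists (mkposreal _ Hp). intros y Hy; exact Hy. }
      destruct (Hbs p) as [[Hb1 Hb2] _].
      apply Rabs_def2 in Hp2. lra.
    - assert (Hp : 0 < l - hi) by lra.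
      destruct (Hl (fun y => Rabs (y - l) < l - hi) 0%nat) as [p [_ Hp2]].
      { exists (mkposreal _ Hp). intros y Hy; exact Hy. }
      destruct (Hbs p) as [[Hb1 Hb2] _].
      apply Rabs_def2 in Hp2. lra. }
  destruct (Hloc l Hlr) as [N HN].
  destruct (Hl (fun y => Rabs (y - l) < / INR (S N)) N) as [p [Hp1 Hp2]].
  { exists (mkposreal _ (inv_S_pos N)). intros y Hy; exact Hy. }
  destruct (Hbs p) as [Hb1 Hb2].
  apply Hb2. apply (Hmono N p); auto.
Qed.

Lemma fin_comb (T : nat) (P : nat -> nat -> Prop) :
  (forall s N N', (N <= N')%nat -> P s N -> P s N') ->
  (forall s, (s <= T)%nat -> exists N, P s N) ->
  exists N, forall s, (s <= T)%nat -> P s N.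
Proof.
  intros Hm. induction T as [|T IH]; intros H.
  - destruct (H 0%nat (le_n 0)) as [N HN]. exists N. intros s Hs.
    replace s with 0%nat by lia. auto.
  - destruct IH as [N1 HN1]. { intros s Hs; apply H; lia. }
    destruct (H (S T) (le_n _)) as [N2 HN2].
    exists (Nat.max N1 N2). intros s Hs.
    destruct (Nat.eq_dec s (S T)) as [->|Hne].
    + apply (Hm _ N2); auto; lia.
    + apply (Hm _ N1); [lia|]. apply HN1; lia.
Qed.

Definition clamp (x : R) : R := Rmax 0 (Rmin x 1).

Lemma clamp_I01 x : I01 (clamp x).
Proof. unfold clamp, I01, Rmax, Rmin. repeat destruct Rle_dec; lra. Qed.

Lemma clamp_id x : I01 x -> clamp x = x.
Proof. unfold clamp, I01, Rmax, Rmin. intros. repeat destruct Rle_dec; lra. Qed.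

Lemma clamp_lip x y : Rabs (clamp y - clamp x) <= Rabs (y - x).
Proof.
  unfold clamp, Rmax, Rmin. unfold Rabs.
  repeat (destruct Rle_dec); repeat destruct Rcase_abs; lra.
Qed.

Lemma cont_clamp (h : R -> R) : cont_I01 h -> continuity (fun x => h (clamp x)).
Proof.
  intros Hc x. unfold continuity_pt, continue_in, limit1_in, limit_in.
  simpl. unfold R_dist. intros eps Heps.
  destruct (Hc (clamp x) (clamp_I01 x) eps Heps) as [del [Hdel Hd]].
  exists del. split; [lra|]. intros y [_ Hy].
  apply Hd. apply clamp_I01. pose proof (clamp_lip x y). lra.
Qed.

Lemma IVT01 (h : R -> R) (x y c : R) : cont_I01 h -> 0 <= x -> x <= y -> y <= 1 ->
  ((h x <= c <= h y) \/ (h y <= c <= h x)) -> exists z, x <= z <= y /\ h z = c.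
Proof.
  intros Hc H0 Hxy H1 Hb.
  destruct (IVT_cor (fun z => h (clamp z) - c) x y) as [z [Hz1 Hz2]].
  - apply continuity_minus; [apply cont_clamp; auto|]. apply continuity_const; intros ? ?; reflexivity.
  - auto.
  - rewrite !clamp_id by (unfold I01; lra).
    destruct Hb as [[? ?]|[? ?]].
      assert (h x - c <= 0) by lra. assert (0 <= h y - c) by lra. nra.
    + assert (0 <= h x - c) by lra. assert (h y - c <= 0) by lra. nra.
  - exists z. split; auto. rewrite clamp_id in Hz2 by (unfold I01; lra). lra.
Qed.

Lemma cont_comp (g h : R -> R) : cont_I01 g -> cont_I01 h -> maps_I01 h ->
  cont_I01 (fun x => g (h x)).
Proof.
  intros Hg Hh Hm x Hx eps Heps.
  destruct (Hg (h x) (Hm x Hx) eps Heps) as [d1 [Hd1 H1]].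
  destruct (Hh x Hx d1 Hd1) as [d2 [Hd2 H2]].
  exists d2. split; [auto|]. intros y Hy Hyx. apply H1; auto.
Qed.

Fixpoint it (g : R -> R) (n : nat) (x : R) : R :=
  match n with O => x | S m => g (it g m x) end.

Lemma it_add g s m x : it g (s + m) x = it g s (it g m x).
Proof. induction s; simpl; auto. rewrite IHs; auto. Qed.

Lemma it_maps g n : maps_I01 g -> maps_I01 (it g n).
Proof. intros Hg. induction n; intros x Hx; simpl; auto. Qed.

Lemma it_cont g n : maps_I01 g -> cont_I01 g -> cont_I01 (it g n).
Proof.
  intros Hm Hc. induction n; simpl.
  - intros x Hx eps Heps. exists eps. split; auto.
  - apply (cont_comp g (it g n)); auto. apply it_maps; auto.
Qed.

Definition spread (h : R -> R) (a b c : R) : Prop :=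
  exists x y, a < x < b /\ a < y < b /\ Rabs (h x - h y) > c.

Lemma pull (h : R -> R) a b x y p : cont_I01 h -> 0 <= a -> b <= 1 ->
  a < x < b -> a < y < b -> Rmin (h x) (h y) <= p <= Rmax (h x) (h y) ->
  exists z, a < z < b /\ h z = p.
Proof.
  intros Hc Ha Hb Hx Hy Hp.
  destruct (Rle_dec x y) as [Hxy|Hxy].
  - destruct (IVT01 h x y p Hc) as [z [Hz1 Hz2]]; try lra.
    { unfold Rmin, Rmax in Hp. destruct Rle_dec; lra. }
    exists z; split; [lra|auto].
  - destruct (IVT01 h y x p Hc) as [z [Hz1 Hz2]]; try lra.
    { unfold Rmin, Rmax in Hp. destruct Rle_dec; lra. }
    exists z; split; [lra|auto].
Qed.

Lemma spread_mid h a b c : spread h a b c -> a < b.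
Proof. intros [x [y [? [? ?]]]]. lra. Qed.

Lemma min4 a b c d : Rmin (Rmin a b) (Rmin c d) <= a /\ Rmin (Rmin a b) (Rmin c d) <= b /\
  Rmin (Rmin a b) (Rmin c d) <= c /\ Rmin (Rmin a b) (Rmin c d) <= d.
Proof. unfold Rmin; repeat destruct Rle_dec; lra. Qed.

Section Core.
Variable g : R -> R.
Hypothesis Hm : maps_I01 g.
Hypothesis Hc : cont_I01 g.
Variable dg : R.
Hypothesis Hdg : 0 < dg.
Hypothesis Hsens : forall a b, 0 <= a -> a < b -> b <= 1 ->
  exists q, (1 <= q)%nat /\ spread (it g q) a b dg.

Lemma g_nonconst a b : 0 <= a -> a < b -> b <= 1 -> spread g a b 0.
Proof.
  intros Ha Hab Hb. apply NNPP; intros Hn.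
  destruct (Hsens a b Ha Hab Hb) as [q [Hq [x [y [Hx [Hy Hd]]]]]].
  assert (Heq : g x = g y).
  { apply NNPP; intros Hne. apply Hn. exists x, y. split; [auto|split; [auto|]].
    apply Rabs_pos_lt. lra. }
  replace q with ((q - 1) + 1)%nat in Hd by lia.
  rewrite !it_add in Hd. simpl in Hd. rewrite Heq in Hd.
  rewrite Rminus_diag, Rabs_R0 in Hd. lra.
Qed.

Lemma nonconst n a b : 0 <= a -> a < b -> b <= 1 -> spread (it g n) a b 0.
Proof.
  intros Ha Hab Hb. induction n as [|n IH].
  - exists ((2*a+b)/3), ((a+2*b)/3). simpl. split; [lra|split; [lra|]].
    rewrite Rabs_left; lra.
  - destruct IH as [x [y [Hx [Hy Hd]]]].
    set (h := it g n) in *.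
    assert (Hcn : cont_I01 h) by (apply it_cont; auto).
    assert (Hmn : maps_I01 h) by (apply it_maps; auto).
    set (c := Rmin (h x) (h y)). set (d := Rmax (h x) (h y)).
    assert (Hcd : c < d).
    { unfold c, d, Rmin, Rmax. destruct Rle_dec; [|lra].
      destruct (Req_dec (h x) (h y)) as [E|E]; [rewrite E, Rminus_diag, Rabs_R0 in Hd; lra|lra]. }
    assert (Hc0 : 0 <= c).
    { unfold c, Rmin. destruct Rle_dec; apply Hmn; unfold I01; lra. }
    assert (Hd1 : d <= 1).
    { unfold d, Rmax. destruct Rle_dec; apply Hmn; unfold I01; lra. }
    destruct (g_nonconst c d Hc0 Hcd Hd1) as [p [q [Hp [Hq Hpq]]]].
    destruct (pull h a b x y p Hcn) as [x' [Hx' Ex']]; try lra.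
    { unfold c, d in Hp. lra. }
    destruct (pull h a b x y q Hcn) as [y' [Hy' Ey']]; try lra.
    { unfold c, d in Hq. lra. }
    exists x', y'. split; [auto|split; [auto|]]. simpl. fold h. rewrite Ex', Ey'. auto.
Qed.

Lemma transfer m a b x y : 0 <= a -> b <= 1 -> a < x < b -> a < y < b ->
  Rabs (it g m x - it g m y) > dg ->
  exists c, 0 <= c /\ c + dg <= 1 /\
    forall s k, spread (it g s) c (c + dg) k -> spread (it g (s + m)) a b k.
Proof.
  intros Ha Hb Hx Hy Hd.
  set (h := it g m) in *.
  assert (Hcn : cont_I01 h) by (apply it_cont; auto).
  assert (Hmn : maps_I01 h) by (apply it_maps; auto).
  assert (Hx01 : I01 (h x)) by (apply Hmn; unfold I01; lra).
  assert (Hy01 : I01 (h y)) by (apply Hmn; unfold I01; lra).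
  assert (Hmm : Rmax (h x) (h y) - Rmin (h x) (h y) > dg).
  { unfold Rmax, Rmin. destruct Rle_dec.
    - rewrite Rabs_left1 in Hd; lra.
    - rewrite Rabs_right in Hd; lra. }
  exists (Rmin (h x) (h y)).
  split. { unfold Rmin; destruct Rle_dec; unfold I01 in *; lra. }
  split. { assert (Rmax (h x) (h y) <= 1) by (unfold Rmax; destruct Rle_dec; unfold I01 in *; lra). lra. }
  intros s k [p [q [Hp [Hq Hpq]]]].
  destruct (pull h a b x y p Hcn) as [x' [Hx' Ex']]; try lra.
  destruct (pull h a b x y q Hcn) as [y' [Hy' Ey']]; try lra.
  exists x', y'. split; [auto|split; [auto|]]. rewrite !it_add. fold h. rewrite Ex', Ey'. auto.
Qed.

Lemma constT : exists T, (1 <= T)%nat /\ forall b, 0 <= b <= 1 - dg ->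
  exists s, (1 <= s <= T)%nat /\ spread (it g s) b (b + dg) dg.
Proof.
  destruct (compact_unif 0 (1 - dg)
    (fun N b => exists s, (1 <= s <= S N)%nat /\ spread (it g s) b (b + dg) dg)) as [N HN].
  - intros n m b Hnm [s [Hs Hsp]]. exists s. split; [lia|auto].
  - intros b Hb. destruct (Hsens b (b + dg)) as [q [Hq [x [y [Hx [Hy Hd]]]]]]; try lra.
    set (e := Rmin (Rmin (x - b) (y - b)) (Rmin (b + dg - x) (b + dg - y))).
    assert (He : 0 < e).
    { unfold e. repeat apply Rmin_pos; lra. }
    destruct (arch_inv e He) as [N0 HN0].
    exists (Nat.max N0 q). intros b' Hb' Hbb.
    pose proof (inv_S_mono N0 (Nat.max N0 q) ltac:(lia)).
    assert (e <= x - b /\ e <= y - b /\ e <= b + dg - x /\ e <= b + dg - y).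
    { unfold e. apply min4. }
    apply Rabs_def2 in Hbb.
    exists q. split; [lia|]. exists x, y. split; [lra|split; [lra|auto]].
  - exists (S N). split; [lia|]. auto.
Qed.

Lemma constEta T : exists eta, 0 < eta /\ forall b, 0 <= b <= 1 - dg ->
  forall s, (s <= T)%nat -> spread (it g s) b (b + dg) eta.
Proof.
  destruct (compact_unif 0 (1 - dg)
    (fun n b => forall s, (s <= T)%nat -> spread (it g s) b (b + dg) (/ INR (S n)))) as [N HN].
  - intros n m b Hnm H s Hs. destruct (H s Hs) as [x [y [Hx [Hy Hd]]]].
    exists x, y. split; [auto|split; [auto|]]. pose proof (inv_S_mono n m Hnm). lra.
  - intros b Hb.
    destruct (fin_comb T (fun s N => forall b', 0 <= b' <= 1 - dg -> Rabs (b' - b) < / INR (S N) ->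
        spread (it g s) b' (b' + dg) (/ INR (S N)))) as [N HN].
    + intros s N N' HNN H b' Hb' Hbb. pose proof (inv_S_mono N N' HNN).
      destruct (H b' Hb') as [x [y [Hx [Hy Hd]]]]; [lra|].
      exists x, y. split; [auto|split; [auto|]]. lra.
    + intros s Hs. destruct (nonconst s b (b + dg)) as [x [y [Hx [Hy Hd]]]]; try lra.
      set (e := Rmin (Rmin (x - b) (y - b)) (Rmin (b + dg - x) (b + dg - y))).
      assert (He : 0 < e).
      { unfold e. repeat apply Rmin_pos; lra. }
      destruct (arch_inv e He) as [N0 HN0].
      destruct (arch_inv _ Hd) as [N1 HN1].
      exists (Nat.max N0 N1). intros b' Hb' Hbb.
      pose proof (inv_S_mono N0 (Nat.max N0 N1) ltac:(lia)).
      pose proof (inv_S_mono N1 (Nat.max N0 N1) ltac:(lia)).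
      assert (e <= x - b /\ e <= y - b /\ e <= b + dg - x /\ e <= b + dg - y).
      { unfold e. apply min4. }
      apply Rabs_def2 in Hbb.
      exists x, y. split; [lra|split; [lra|]]. lra.
    + exists N. intros b' Hb' Hbb s Hs. apply HN; auto.
  - exists (/ INR (S N)). split; [apply inv_S_pos|]. auto.
Qed.

Theorem cofinite : exists eta, 0 < eta /\ forall a b, 0 <= a -> a < b -> b <= 1 ->
  exists Q, forall q, (Q <= q)%nat -> spread (it g q) a b eta.
Proof.
  destruct constT as [T [HT1 HT]].
  destruct (constEta T) as [eta [Heta HE]].
  exists eta. split; auto. intros a b Ha Hab Hb.
  assert (Step : forall m, spread (it g m) a b dg ->
     (forall s, (1 <= s <= T)%nat -> spread (it g (m + s)) a b eta) /\
     exists s, (1 <= s <= T)%nat /\ spread (it g (m + s)) a b dg).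
  { intros m [x [y [Hx [Hy Hd]]]].
    destruct (transfer m a b x y Ha Hb Hx Hy Hd) as [c [Hc0 [Hc1 Htr]]].
    split.
    - intros s Hs. rewrite Nat.add_comm. apply Htr. apply HE; [lra|lia].
    - destruct (HT c) as [s [Hs Hsp]]; [lra|]. exists s. split; auto.
      rewrite Nat.add_comm. apply Htr; auto. }
  destruct (Hsens a b Ha Hab Hb) as [n [Hn Hsp]].
  assert (Claim : forall j, exists m, spread (it g m) a b dg /\ (n + j <= m)%nat /\
     forall t, (n < t <= m)%nat -> spread (it g t) a b eta).
  { induction j as [|j IH].
    - exists n. split; [auto|split; [lia|]]. intros t Ht; lia.
    - destruct IH as [m [Hm1 [Hm2 Hm3]]].
      destruct (Step m Hm1) as [Hall [s [Hs Hs2]]].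
      exists (m + s)%nat. split; [auto|split; [lia|]].
      intros t Ht. destruct (Nat.le_gt_cases t m) as [Htm|Htm].
      + apply Hm3; lia.
      + replace t with (m + (t - m))%nat by lia. apply Hall; lia. }
  exists (S n). intros q Hq.
  destruct (Claim q) as [m [_ [Hm2 Hm3]]]. apply Hm3; lia.
Qed.

End Core.

Lemma comp_add (f : nat -> R -> R) i n m x : comp f i (n + m) x = comp f (i + n) m (comp f i n x).
Proof.
  induction m as [|m IH]; simpl.
  - rewrite Nat.add_0_r. auto.
  - rewrite Nat.add_succ_r. simpl. rewrite IH, Nat.add_assoc. auto.
Qed.

Lemma power_comp (f : nat -> R -> R) v n x : comp (power_seq f v) 1 n x = comp f 1 (v * n) x.
Proof.
  induction n as [|n IH]; simpl.
  - rewrite Nat.mul_0_r. auto.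
  - rewrite IH. unfold power_seq. replace (1 + n - 1)%nat with n by lia.
    replace (v * S n)%nat with (v * n + v)%nat by lia.
    rewrite comp_add. f_equal. lia.
Qed.

Lemma Nset_pow1 (f : nat -> R -> R) V d n : Nset (power_seq f 1) V d n -> Nset f V d n.
Proof.
  intros [Hn [u [v [Hu [Hv Hd]]]]]. split; auto. exists u, v.
  rewrite !power_comp, Nat.mul_1_l in Hd. auto.
Qed.

Lemma open_int01 a b : 0 <= a -> a < b -> b <= 1 -> nonempty_open_I01 (fun x => a < x < b).
Proof.
  intros Ha Hab Hb. split; [split|].
  - intros x Hx. unfold I01; lra.
  - intros x Hx. exists (Rmin (x - a) (b - x)). split.
    + apply Rmin_pos; lra.
    + intros y _ Hy. apply Rabs_def2 in Hy.
      pose proof (Rmin_l (x - a) (b - x)). pose proof (Rmin_r (x - a) (b - x)). lra.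
  - exists ((a + b) / 2). lra.
Qed.

Lemma interval_in U : nonempty_open_I01 U ->
  exists a b, 0 <= a /\ a < b /\ b <= 1 /\ forall x, a < x < b -> U x.
Proof.
  intros [[Hin Hop] [x Hx]].
  destruct (Hop x Hx) as [eps [Heps H]].
  pose proof (Hin x Hx) as Hx01. unfold I01 in Hx01.
  set (e := Rmin eps 1 / 2).
  assert (He : 0 < e /\ e < eps /\ e < 1).
  { unfold e, Rmin. destruct Rle_dec; lra. }
  exists (Rmax 0 (x - e)), (Rmin 1 (x + e)).
  split; [unfold Rmax; destruct Rle_dec; lra|].
  split; [unfold Rmax, Rmin; repeat destruct Rle_dec; lra|].
  split; [unfold Rmin; destruct Rle_dec; lra|].
  intros y Hy. apply H.
  - unfold I01, Rmax, Rmin in *; repeat destruct Rle_dec; lra.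
  - apply Rabs_def1; unfold Rmax, Rmin in *; repeat destruct Rle_dec; lra.
Qed.

Lemma unif_cont h eps : cont_I01 h -> 0 < eps -> exists N, forall b y, I01 b -> I01 y ->
  Rabs (y - b) < / INR (S N) -> Rabs (h y - h b) < eps.
Proof.
  intros Hc Heps.
  destruct (compact_unif 0 1 (fun N b => forall y, I01 y -> Rabs (y - b) < / INR (S N) ->
       Rabs (h y - h b) < eps)) as [N HN].
  - intros n m b Hnm H y Hy Hyb. pose proof (inv_S_mono n m Hnm). apply H; auto. lra.
  - intros b Hb. assert (Heps2 : 0 < eps / 2) by lra.
    destruct (Hc b Hb _ Heps2) as [del [Hdel Hd]].
    assert (Hdel2 : 0 < del / 2) by lra.
    destruct (arch_inv _ Hdel2) as [N HN]. exists N.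
    intros b' Hb' Hbb y Hy Hyb.
    assert (H1 : Rabs (h y - h b) < eps / 2).
    { apply Hd; auto. apply Rabs_def2 in Hbb. apply Rabs_def2 in Hyb. apply Rabs_def1; lra. }
    assert (H2 : Rabs (h b' - h b) < eps / 2).
    { apply Hd; auto. apply Rabs_def2 in Hbb. apply Rabs_def1; lra. }
    replace (h y - h b') with ((h y - h b) - (h b' - h b)) by ring.
    pose proof (Rabs_triang_inv2 (h y - h b) (h b' - h b)).
    pose proof (Rabs_triang (h y - h b) (- (h b' - h b))). rewrite Rabs_Ropp in *.
    replace (h y - h b - (h b' - h b)) with (h y - h b + - (h b' - h b)) by ring. lra.
  - exists N. intros b y Hb Hy. apply HN; auto.
Qed.

Section NAS.
Variable f : nat -> R -> R.
Hypothesis hmap : forall n, (1 <= n)%nat -> maps_I01 (f n).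
Hypothesis hcont : forall n, (1 <= n)%nat -> cont_I01 (f n).
Variable k : nat.
Hypothesis Hk : (1 <= k)%nat.
Hypothesis Hper : forall l j, (1 <= l)%nat -> (1 <= j <= k)%nat ->
      forall x, I01 x -> f (j + k * l)%nat x = f j x.

Lemma comp_maps i n : (1 <= i)%nat -> maps_I01 (comp f i n).
Proof.
  intros Hi. induction n; intros x Hx; simpl; auto. apply hmap; [lia|]. auto.
Qed.

Lemma comp_cont i n : (1 <= i)%nat -> cont_I01 (comp f i n).
Proof.
  intros Hi. induction n; simpl.
  - intros x Hx eps Heps. exists eps. split; auto.
  - apply (cont_comp (f (i + n)%nat) (comp f i n)); auto. apply hcont; lia.
    apply comp_maps; auto.
Qed.

Lemma f_per i q x : (1 <= i)%nat -> I01 x -> f (i + k * q)%nat x = f i x.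
Proof.
  intros Hi Hx.
  pose proof (Nat.div_mod_eq (i - 1) k) as Hdm.
  pose proof (Nat.mod_upper_bound (i - 1) k ltac:(lia)) as Hub.
  set (l := ((i - 1) / k)%nat) in *. set (j := ((i - 1) mod k + 1)%nat).
  assert (Hij : i = (j + k * l)%nat) by (unfold j; lia).
  assert (Hj : (1 <= j <= k)%nat) by (unfold j; lia).
  assert (Hfi : f i x = f j x).
  { destruct l as [|l'].
    - rewrite Hij. f_equal. lia.
    - rewrite Hij. apply Hper; auto. lia. }
  rewrite Hfi.
  destruct (Nat.eq_dec (l + q) 0) as [E|E].
  - assert (i + k * q = j)%nat by nia. rewrite H. auto.
  - replace (i + k * q)%nat with (j + k * (l + q))%nat by (rewrite Hij; nia).
    apply Hper; auto. lia.
Qed.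

Lemma comp_per i q r x : (1 <= i)%nat -> I01 x -> comp f (i + k * q) r x = comp f i r x.
Proof.
  intros Hi Hx. induction r as [|r IH]; simpl; auto.
  rewrite IH. replace (i + k * q + r)%nat with ((i + r) + k * q)%nat by lia.
  apply f_per; [lia|]. apply comp_maps; auto.
Qed.

Definition gk := comp f 1 k.

Lemma gk_maps : maps_I01 gk.
Proof. apply comp_maps; lia. Qed.
Lemma gk_cont : cont_I01 gk.
Proof. apply comp_cont; lia. Qed.

Lemma comp_kq q x : I01 x -> comp f 1 (k * q) x = it gk q x.
Proof.
  intros Hx. induction q as [|q IH].
  - rewrite Nat.mul_0_r. auto.
  - replace (k * S q)%nat with (k * q + k)%nat by lia.
    rewrite comp_add. rewrite (Nat.add_comm 1 (k * q)). rewrite <- (Nat.add_comm 1).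
    rewrite comp_per; [|lia|apply comp_maps; auto; lia]. rewrite IH. reflexivity.
Qed.

Lemma comp_kqr q r x : I01 x -> comp f 1 (k * q + r) x = comp f 1 r (it gk q x).
Proof.
  intros Hx. rewrite comp_add, comp_kq by auto.
  rewrite (Nat.add_comm 1 (k * q)), <- (Nat.add_comm 1).
  rewrite comp_per; auto. apply it_maps; auto. apply gk_maps.
Qed.

Lemma sens_g : sensitive f -> exists dg, 0 < dg /\ forall a b, 0 <= a -> a < b -> b <= 1 ->
  exists q, (1 <= q)%nat /\ spread (it gk q) a b dg.
Proof.
  intros [d [Hd Hs]].
  destruct (fin_comb k (fun r N => forall b y, I01 b -> I01 y ->
     Rabs (y - b) < / INR (S N) -> Rabs (comp f 1 r y - comp f 1 r b) < d)) as [N HN].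
  - intros r N N' HNN H b y Hb Hy Hyb. pose proof (inv_S_mono N N' HNN). apply H; auto. lra.
  - intros r Hr. apply unif_cont; auto. apply comp_cont; lia.
  - set (rho := / INR (S N)). assert (Hrho : 0 < rho) by apply inv_S_pos.
    exists (rho / 2). split; [lra|]. intros a b Ha Hab Hb.
    set (b' := Rmin b (a + rho / 2)).
    assert (Hb' : a < b' /\ b' <= b /\ b' <= a + rho / 2).
    { unfold b', Rmin; destruct Rle_dec; lra. }
    assert (HVo : nonempty_open_I01 (fun x => a < x < b')) by (apply open_int01; lra).
    destruct (Hs _ HVo) as [n [Hn [u [v [Hu [Hv Hdd]]]]]].
    assert (Hu01 : I01 u) by (unfold I01; lra).
    assert (Hv01 : I01 v) by (unfold I01; lra).
    pose proof (Nat.div_mod_eq n k) as Hdm.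
    pose proof (Nat.mod_upper_bound n k ltac:(lia)) as Hub.
    set (q := (n / k)%nat) in *. set (r := (n mod k)%nat) in *.
    rewrite Hdm, !comp_kqr in Hdd by auto.
    assert (Hbig : ~ Rabs (it gk q v - it gk q u) < rho).
    { intros Hc. assert (Hr : (r <= k)%nat) by lia.
      pose proof (HN r Hr (it gk q u) (it gk q v)
        (it_maps gk q gk_maps u Hu01) (it_maps gk q gk_maps v Hv01) Hc) as Hx.
      rewrite Rabs_minus_sym in Hx. lra. }
    exists q. split.
    + destruct q as [|q']; [|lia]. exfalso. apply Hbig. simpl.
      apply Rabs_def1; lra.
    + exists u, v. split; [lra|split; [lra|]]. rewrite Rabs_minus_sym. lra.
Qed.

Lemma sens_unif : sensitive f -> exists eta, 0 < eta /\ forall r (v : nat -> nat) U,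
  (forall i, (1 <= i <= r)%nat -> (1 <= v i)%nat) ->
  (forall i, (1 <= i <= r)%nat -> nonempty_open_I01 (U i)) ->
  exists n, forall i, (1 <= i <= r)%nat -> Nset (power_seq f (v i)) (U i) eta n.
Proof.
  intros Hs. destruct (sens_g Hs) as [dg [Hdg Hg]].
  destruct (cofinite gk gk_maps gk_cont dg Hdg Hg) as [eta [Heta Hco]].
  exists eta. split; auto. intros r v U Hv HU.
  destruct (fin_comb r (fun i N => (1 <= i <= r)%nat -> forall q, (N <= q)%nat ->
      exists u w, U i u /\ U i w /\ Rabs (it gk q u - it gk q w) > eta)) as [N HN].
  - intros i N N' HNN H Hi q Hq. apply H; auto. lia.
  - intros i Hi. destruct (Nat.eq_dec i 0) as [E|E].
    + exists 0%nat. intros Hc; lia.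
    + destruct (interval_in (U i)) as [a [b [Ha [Hab [Hb Hin]]]]]; [apply HU; lia|].
      destruct (Hco a b Ha Hab Hb) as [Q HQ]. exists Q. intros _ q Hq.
      destruct (HQ q Hq) as [x [y [Hx [Hy Hd]]]]. exists x, y. auto.
  - exists (k * S N)%nat. intros i Hi. split; [nia|].
    destruct (HN i ltac:(lia) Hi (v i * S N)%nat) as [u [w [Hu [Hw Hd]]]].
    { pose proof (Hv i Hi). nia. }
    exists u, w. split; [auto|split; [auto|]].
    assert (HU' := HU i Hi). destruct HU' as [[Hin _] _].
    rewrite !power_comp.
    replace (v i * (k * S N))%nat with (k * (v i * S N))%nat by ring.
    rewrite !comp_kq by auto. auto.
Qed.

End NAS.

Lemma strong_sens f : strongly_multi_sensitive f -> sensitive f.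
Proof.
  intros H. destruct (H 1%nat (fun _ => 1%nat)) as [d [Hd HU]]; [lia|intros; lia|].
  exists d. split; auto. intros V HV.
  destruct (HU (fun _ => V)) as [n Hn]; [auto|].
  exists n. apply Nset_pow1. apply (Hn 1%nat). lia.
Qed.

Lemma Nsens_sens f : N_sensitive f -> sensitive f.
Proof.
  intros H. destruct (H 1%nat) as [d [Hd HU]]; [lia|].
  exists d. split; auto. intros V HV.
  destruct (HU (fun _ => V)) as [n Hn]; [auto|].
  exists n. apply Nset_pow1. apply (Hn 1%nat). lia.
Qed.

Lemma multi_sens f : multi_sensitive f -> sensitive f.
Proof.
  intros [d [Hd H]]. exists d. split; auto. intros V HV.
  destruct (H 1%nat (fun _ => V)) as [n Hn]; [lia|auto|].
  exists n. apply (Hn 1%nat). lia.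
Qed.

Lemma strong_N f : strongly_multi_sensitive f -> N_sensitive f.
Proof. intros H n Hn. apply H; auto. intros i Hi; lia. Qed.

Theorem mainTheorem2 (f : nat -> R -> R)
  (hmap : forall n, (1 <= n)%nat -> maps_I01 (f n))
  (hcont : forall n, (1 <= n)%nat -> cont_I01 (f n))
  (hper : periodic f) :
  (strongly_multi_sensitive f <-> N_sensitive f) /\
  (N_sensitive f <-> multi_sensitive f) /\
  (multi_sensitive f <-> sensitive f).
Proof.
  destruct hper as [k [Hk Hper]].
  assert (HU := sens_unif f hmap hcont k Hk Hper).
  assert (S1 : sensitive f -> strongly_multi_sensitive f).
  { intros Hs r v Hr Hv. destruct (HU Hs) as [eta [Heta H]].
    exists eta. split; [auto|]. intros U HU'. apply H; auto. }
  assert (S2 : sensitive f -> multi_sensitive f).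
  { intros Hs. destruct (HU Hs) as [eta [Heta H]].
    exists eta. split; [auto|]. intros m V Hm HV.
    destruct (H m (fun _ => 1%nat) V) as [n Hn]; auto.
    exists n. intros i Hi. apply Nset_pow1. auto. }
  split; [|split]; split; intros H.
  - apply strong_N; auto.
  - apply S1, Nsens_sens; auto.
  - apply S2, Nsens_sens; auto.
  - apply strong_N, S1, multi_sens; auto.
  - apply multi_sens; auto.
  - apply S2; auto.
Qed.
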